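(* Let $k\ge1$ be an integer, $\mathbf G$ an abelian group, $A,C\subseteq\mathbf G$ finite and $B\subseteq\mathbf G^k$ finite. Then $$|A|\cdot|B+\Delta(C)|\le|B+\Delta(A)|\cdot|A+C|.$$
   Context: $\Delta(S)=\{(s,\dots,s)\in\mathbf G^k:s\in S\}$ for $S\subseteq\mathbf G$; sums of subsets of $\mathbf G^k$ are coordinatewise. *)

(* Defs.v *)
From HB Require Import structures.
From mathcomp Require Import all_boot all_order all_algebra.
From mathcomp Require Import finmap.
Set Implicit Arguments. Unset Strict Implicit. Unset Printing Implicit Defensive.
Import GRing.Theory.
Local Open Scope ring_scope.
Local Open Scope fset_scope.

Definition sumset (V : zmodType) (X Y : {fset V}) : {fset V} :=
  [fset (x + y)%R | x in X, y in Y].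

(* Diagonal embedding Δ(S) = {(s,...,s) : s ∈ S} ⊆ G^k, with G^k = 'rV[G]_k
   (coordinatewise addition). *)
Definition diag (G : zmodType) (k : nat) (S : {fset G}) : {fset 'rV[G]_k} :=
  [fset (const_mx s : 'rV[G]_k) | s in S].

(* Main.v *)
Require Import Defs.
From HB Require Import structures.
From mathcomp Require Import all_boot all_order all_algebra.
From mathcomp Require Import finmap zify.
Import GRing.Theory.
Local Open Scope fset_scope.
Local Open Scope ring_scope.

Lemma sumsetP (V : zmodType) (X Y : {fset V}) u :
  reflect (exists2 x, x \in X & exists2 y, y \in Y & u = x + y) (u \in sumset X Y).
Proof. exact: imfset2P. Qed.

Lemma sumset_in (V : zmodType) (X Y : {fset V}) x y :
  x \in X -> y \in Y -> x + y \in sumset X Y.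
Proof. by move=> hx hy; apply/sumsetP; exists x => //; exists y. Qed.

Lemma card_inj_im (T T' : choiceType) (f : T -> T') (S : {fset T}) :
  {in S &, injective f} -> #|` [fset f x | x in S]| = #|` S|.
Proof. by move=> fi; rewrite card_in_imfset. Qed.
Lemma card_im_le (T T' : choiceType) (f : T -> T') (S : {fset T}) :
  (#|` [fset f x | x in S]| <= #|` S|)%N.
Proof. exact: leq_imfset_card. Qed.

Lemma cardU_le (T : choiceType) (A B : {fset T}) : (#|` A `|` B| <= #|`A| + #|`B|)%N.
Proof. by rewrite -cardfsUI leq_addr. Qed.

Lemma sumset0 (V : zmodType) (X : {fset V}) : sumset X fset0 = fset0.
Proof. by apply/fsetP=> u; rewrite in_fset0; apply/sumsetP => -[x _ [y]]. Qed.

Lemma sumsetS (V : zmodType) (X X' Y : {fset V}) : X `<=` X' -> sumset X Y `<=` sumset X' Y.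
Proof.
move=> /fsubsetP h; apply/fsubsetP => u /sumsetP [x hx [y hy ->]].
by apply: sumset_in => //; apply: h.
Qed.

Section Petridis.
Variables (V : zmodType) (X Y : {fset V}).
Hypothesis hmin : forall W, W `<=` X -> W != fset0 ->
  (#|`sumset X Y| * #|`W| <= #|`sumset W Y| * #|`X|)%N.

Lemma petridis n : forall Z : {fset V}, #|`Z| = n ->
  (#|` sumset (sumset X Y) Z| * #|`X| <= #|`sumset X Y| * #|`sumset X Z|)%N.
Proof.
elim: n => [|n IH] Z hZ.
  by move/cardfs0_eq: hZ => ->; rewrite sumset0 cardfs0.
have [z zZ] : exists z, z \in Z.
  by apply/fset0Pn; rewrite -cardfs_gt0 hZ.
set Z' := Z `\ z.
have hZ' : #|`Z'| = n by move: hZ; rewrite (cardfsD1 z) zZ add1n => -[].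
have IHZ := IH Z' hZ'.
set S' := sumset (sumset X Y) Z'.
set W := [fset x in X | all (fun y => x + y + z \in S') Y].
have WX : W `<=` X by apply/fsubsetP => x; rewrite in_fset inE => /andP[].
have WYXY : sumset W Y `<=` sumset X Y by apply: sumsetS.
have hc : sumset (sumset X Y) Z `<=` S' `|` [fset (v + z)%R | v in sumset X Y `\` sumset W Y].
  apply/fsubsetP => u /sumsetP [v hv [z0 hz0 ->]].
  rewrite in_fsetU; case: (eqVneq z0 z) => [->|nz].
    case hw: (v \in sumset W Y).
      move/sumsetP: hw => [w hw [y hy ->]]; apply/orP; left.
      move: hw; rewrite in_fset inE => /andP[_ /allP]; apply; exact: hy.
    by apply/orP; right; apply: in_imfset; rewrite /= in_fsetD hw hv.
  by apply/orP; left; apply: sumset_in => //; rewrite in_fsetD1 nz.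
have c1 : (#|` sumset (sumset X Y) Z| + #|`sumset W Y| <= #|`S'| + #|`sumset X Y|)%N.
  have := fsubset_leq_card hc.
  move=> h1; have h2 := @cardU_le V S' [fset (v + z)%R | v in sumset X Y `\` sumset W Y].
  have h3 := @card_im_le V V (fun v => (v + z)%R) (sumset X Y `\` sumset W Y).
  rewrite cardfsDS // in h3.
  have h4 := fsubset_leq_card WYXY.
  have h5 := leq_trans h1 (leq_trans h2 (leq_add (leqnn _) h3)).
  clear h1 h2 h3 hc. lia.
set I := [fset (x + z)%R | x in X `\` W].
have hd : I `&` sumset X Z' = fset0.
  apply/fsetP => u; rewrite in_fsetI in_fset0.
  apply/negbTE/negP => /andP [/imfsetP [x /= hx ->] /sumsetP [x' hx' [z' hz' e]]].
  move: hx; rewrite in_fsetD => /andP [/negP nW hx]; apply: nW.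
  rewrite in_fset inE hx /=; apply/allP => y hy.
  have -> : x + y + z = (x' + y) + z' by rewrite -addrA (addrC y) addrA e; rewrite -!addrA (addrC y).
  by apply: sumset_in => //; apply: sumset_in.
have hd2 : I `|` sumset X Z' `<=` sumset X Z.
  apply/fsubsetP => u; rewrite in_fsetU => /orP [/imfsetP [x /= hx ->]|/sumsetP [x hx [z' hz' ->]]].
    by apply: sumset_in => //; move: hx; rewrite in_fsetD => /andP[].
  by apply: sumset_in => //; move: hz'; rewrite in_fsetD1 => /andP[].
have c2 : (#|`sumset X Z'| + #|`X| <= #|`sumset X Z| + #|`W|)%N.
  have h1 := fsubset_leq_card hd2.
  have h2 := @cardfsUI V I (sumset X Z').
  rewrite hd cardfs0 addn0 in h2.
  have hI : #|`I| = (#|`X| - #|`W|)%N.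
    by rewrite /I card_inj_im ?cardfsDS // => a b _ _ /addIr.
  rewrite hI in h2.
  have h4 := fsubset_leq_card WX.
  have h5 : (#|`X| - #|`W| + #|`sumset X Z'| <= #|`sumset X Z|)%N by rewrite -h2; exact: h1.
  clear h1 h2 hI hd hd2. lia.
have c3 : (#|`sumset X Y| * #|`W| <= #|`sumset W Y| * #|`X|)%N.
  case: (eqVneq W fset0) => [->|nW]; first by rewrite cardfs0 muln0.
  exact: hmin.
move: c1 c2 c3 IHZ.
set a := #|` sumset (sumset X Y) Z|; set t := #|`sumset W Y|; set a' := #|`S'|.
set s := #|`sumset X Y|; set b' := #|`sumset X Z'|; set m := #|`X|.
set b := #|`sumset X Z|; set w := #|`W|.
move=> c1 c2 c3 IHZ.
have e1 : (a * m + t * m <= a' * m + s * m)%N by rewrite -!mulnDl leq_mul2r c1 orbT.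
have e2 : (s * b' + s * m <= s * b + s * w)%N by rewrite -!mulnDr leq_mul2l c2 orbT.
lia.
Qed.
End Petridis.

From Stdlib Require Import Classical.

Definition minimal (V : zmodType) (X Y : {fset V}) :=
  forall W, W `<=` X -> W != fset0 ->
  (#|`sumset X Y| * #|`W| <= #|`sumset W Y| * #|`X|)%N.
Arguments minimal {V}.

Lemma exists_min (V : zmodType) (Y : {fset V}) n : forall X : {fset V},
  X != fset0 -> (#|`X| <= n)%N ->
  exists2 X', X' `<=` X /\ X' != fset0 & minimal X' Y /\
    (#|`sumset X' Y| * #|`X| <= #|`sumset X Y| * #|`X'|)%N.
Proof.
elim: n => [|n IH] X nX hX.
  by move: nX; rewrite -cardfs_gt0; case: #|`X| hX.
case: (classic (minimal X Y)) => [hm|hm].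
  by exists X; split => //; rewrite mulnC.
have [W hW] : exists W, ~ (W `<=` X -> W != fset0 ->
  (#|`sumset X Y| * #|`W| <= #|`sumset W Y| * #|`X|)%N).
  by apply: not_all_ex_not.
have WX : W `<=` X by apply: NNPP => h; apply: hW => h'; case: (h h').
have nW : W != fset0 by apply: NNPP => h; apply: hW => _ h'; case: (h h').
have lt : (#|`sumset W Y| * #|`X| < #|`sumset X Y| * #|`W|)%N.
  by rewrite ltnNge; apply/negP => h; apply: hW.
have cW : (#|`W| <= n)%N.
  have := fsubset_leq_card WX; rewrite leq_eqVlt => /orP [/eqP e|]; last first.
    by move=> h; rewrite -ltnS (leq_trans h).
  move/fsubset_cardP: (e) => /(_ WX) /fsetP eWX.
  by move: lt; rewrite eWX ltnn.
have [X' [X'W nX'] [mX' r]] := IH W nW cW.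
exists X'; split => //; first exact: fsubset_trans WX.
move: r lt; set f' := #|`sumset X' Y|; set w := #|`W|; set fw := #|`sumset W Y|;
  set m := #|`X|; set m' := #|`X'|; set f := #|`sumset X Y| => r lt.
have w0 : (0 < w)%N by rewrite cardfs_gt0.
rewrite -(leq_pmul2r w0).
apply: (@leq_trans (fw * m' * m)).
  by rewrite mulnAC leq_mul2r r orbT.
by rewrite (mulnAC fw) (mulnAC f) leq_mul2r (ltnW lt) orbT.
Qed.

Lemma sumsetC (V : zmodType) (X Y : {fset V}) : sumset X Y = sumset Y X.
Proof.
by apply/fsetP => u; apply/sumsetP/sumsetP => -[x hx [y hy ->]];
  exists y => //; exists x => //; rewrite addrC.
Qed.

Theorem corollary36 (G : zmodType) (k : nat) (hk : (1 <= k)%N)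
  (A C : {fset G}) (B : {fset 'rV[G]_k}) :
  (#|` A| * #|` sumset B (diag k C)| <=
   #|` sumset B (diag k A)| * #|` sumset A C|)%N.
Proof.
case: (eqVneq A fset0) => [->|nA]; first by rewrite cardfs0.
set DA := diag k A.
have cDA : #|`DA| = #|`A|.
  rewrite /DA /diag card_inj_im // => a b _ _ e.
  have := congr1 (fun M : 'rV[G]_k => M 0 (Ordinal hk)) e.
  by rewrite /= !mxE.
have nDA : DA != fset0 by rewrite -cardfs_gt0 cDA cardfs_gt0.
have [X' [X'DA nX'] [mX' r]] := @exists_min _ B _ DA nDA (leqnn #|`DA|).
have P := @petridis _ X' B mX' _ (diag k C) (erefl _).
have [x0 hx0] : exists x0, x0 \in X' by apply/fset0Pn.
have i1 : (#|`sumset B (diag k C)| <= #|`sumset (sumset X' B) (diag k C)|)%N.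
  rewrite -(@card_inj_im _ _ (fun u => x0 + u)); last by move=> a b _ _ /addrI.
  apply: fsubset_leq_card; apply/fsubsetP => u /imfsetP [v /= /sumsetP [b hb [d hd ->]] ->].
  by rewrite addrA; apply: sumset_in => //; apply: sumset_in.
have i2 : (#|`sumset X' (diag k C)| <= #|`sumset A C|)%N.
  apply: (@leq_trans #|`diag k (sumset A C)|); last exact: card_im_le.
  apply: fsubset_leq_card; apply/fsubsetP => u /sumsetP [x hx [d hd ->]].
  move/fsubsetP: X'DA => /(_ x hx) /imfsetP [a /= ha ->].
  move: hd => /imfsetP [c /= hc ->].
  have -> : (const_mx a : 'rV[G]_k) + const_mx c = const_mx (a + c).
    by apply/matrixP => i j; rewrite !mxE.
  by apply: in_imfset; apply: sumset_in.
rewrite -cDA (@sumsetC _ B DA).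
move: P i1 i2 r.
set c := #|`sumset B (diag k C)|; set e := #|`sumset (sumset X' B) (diag k C)|.
set m' := #|`X'|; set f' := #|`sumset X' B|; set g := #|`sumset X' (diag k C)|.
set h := #|`sumset A C|; set a := #|`DA|; set F := #|`sumset DA B|.
move=> P i1 i2 r.
have m0 : (0 < m')%N by rewrite cardfs_gt0.
rewrite -(leq_pmul2r m0).
apply: (@leq_trans (a * (e * m'))).
  by rewrite -mulnA leq_mul2l leq_mul2r i1 !orbT.
apply: (@leq_trans (a * (f' * g))); first by rewrite leq_mul2l P orbT.
rewrite mulnA (mulnC a f').
apply: (@leq_trans (F * m' * g)); first by rewrite leq_mul2r r orbT.
by rewrite (mulnAC F h) -!mulnA leq_mul2l leq_mul2l i2 !orbT.
Qed.
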